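(* Let $p\ge3$ be a prime and let $C$ be a Hochschild cochain complex, free over $\mathbb Z$, with its cup product $*$ and brace operations. Let $\tilde x\in C$ be a cochain of odd degree with $\partial\tilde x\in pC$, and let $x$ be its image in $C\otimes\mathbb Z_p$, so that $x$ is a cycle. For a cochain $\tilde y$ with $\partial\tilde y\in pC$ and image $y$ mod $p$, define the chain-level Bockstein $\beta y:=\frac1p\partial\tilde y\bmod p$. Set $\xi_1x:=x^{[p]}$ and $\zeta_1x:=\sum_{i=1}^{p-1}\frac{(-1)^i}{i}x^{[i]}*x^{[p-i]}$, where $x^{[k]}=(\cdots((x\{x\})\{x\})\cdots)\{x\}$ ($k-1$ braces). Then, on the level of chains in $C\otimes\mathbb Z_p$, $$\zeta_1x=\beta(\xi_1x)-(\mathrm{ad}\,x)^{p-1}(\beta x),$$ where $\beta(\xi_1x)$ is computed from the lift $\tilde x^{[p]}$, and $\mathrm{ad}\,x=[x,\cdot\,]$ with Gerstenhaber bracket $[a,b]=a\{b\}-(-1)^{|a||b|}b\{a\}$, $|a|=\deg a+1$.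
   Context: For the Hochschild cochain complex of an associative algebra, $*$ is the cup product and $a\{b_1,\dots,b_n\}$ are the Gerstenhaber–Voronov brace operations; $\deg$ is the cochain degree, and the brace $\{\}_{n+1}$ raises $\deg$ by $n$. *)

(* Defs.v *)
From HB Require Import structures.
From mathcomp Require Import all_boot all_order all_algebra.
Set Implicit Arguments. Unset Strict Implicit. Unset Printing Implicit Defensive.
Import Order.TTheory GRing.Theory Num.Theory.
Local Open Scope ring_scope.

Definition Zfree (M : zmodType) : Prop :=
  exists (J : eqType) (b : J -> M),
    (forall m : M, exists s : seq (J * int), m = \sum_(jc <- s) b jc.1 *~ jc.2) /\
    (forall (s : seq J) (c : J -> int), uniq s ->
        \sum_(j <- s) b j *~ c j = 0 -> forall j, j \in s -> c j = 0).

(* An element of the full cochain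
   complex  prod_n Hom_Z(A^{(x)n}, A)  is represented by a function on finite
   sequences of elements of A: its restriction to sequences of length n is its
   component of degree n. *)
Definition cochain (A : pzRingType) := seq A -> A.

Definition is_cochain (A : pzRingType) (n : nat) (f : cochain A) : Prop :=
  (forall s, size s != n -> f s = 0) /\
  (forall (s t : seq A) (a b : A), (size s + size t).+1 = n ->
      f (s ++ (a + b) :: t) = f (s ++ a :: t) + f (s ++ b :: t)).

Definition mergeat (A : pzRingType) (i : nat) (s : seq A) : seq A :=
  take i s ++ (nth 0 s i * nth 0 s i.+1) :: drop i.+2 s.

(* Hochschild differential: for f of degree n,
   (df)(a_0,..,a_n) = a_0 f(a_1..a_n) + sum_{i<n} (-1)^(i+1) f(..,a_i a_(i+1),..)
                      + (-1)^(n+1) f(a_0..a_(n-1)) a_n. *)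
Definition hdiff (A : pzRingType) (f : cochain A) : cochain A :=
  fun s => match s with
  | [::] => 0
  | a :: t => a * f t
      + \sum_(i < size t) (-1) ^+ i.+1 * f (mergeat i s)
      + (-1) ^+ (size s) * f (belast a t) * last a t
  end.

Definition cup (A : pzRingType) (f g : cochain A) : cochain A :=
  fun s => \sum_(k < (size s).+1) f (take k s) * g (drop k s).

(* Gerstenhaber brace f{g}: for f of degree m and g of degree n,
   f{g}(a_1..a_(m+n-1)) =
     sum_{i=0}^{m-1} (-1)^(i(n-1)) f(a_1..a_i, g(a_(i+1)..a_(i+n)), a_(i+n+1)..);
   written degree-wise (n ranges over the degree of the inserted component). *)
Definition brace (A : pzRingType) (f g : cochain A) : cochain A :=
  fun s => \sum_(i < (size s).+1) \sum_(n < (size s).+1 - i)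
     (-1) ^+ (i * n.+1) * f (take i s ++ g (take n (drop i s)) :: drop (i + n) s).

Definition gbracket (A : pzRingType) (m n : nat) (a b : cochain A) : cochain A :=
  fun s => brace a b s - (-1) ^+ (m.+1 * n.+1) * brace b a s.

Fixpoint adpow (A : pzRingType) (d e k : nat) (x y : cochain A) : cochain A :=
  match k with
  | 0 => y
  | k'.+1 => gbracket d (e + k' * (d - 1)) x (adpow d e k' x y)
  end.

Definition bpow (A : pzRingType) (x : cochain A) (k : nat) : cochain A :=
  iter k.-1 (fun y => brace y x) x.

(* zeta_1 x = sum_{i=1}^{p-1} c_i x^[i] * x^[p-i], where the integers c_i
   represent (-1)^i / i modulo p. *)
Definition zeta1 (A : pzRingType) (p : nat) (c : nat -> int) (x : cochain A)
  : cochain A :=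
  fun s => \sum_(1 <= i < p) cup (bpow x i) (bpow x (p - i)) s *~ c i.

(* Main.v *)
Require Import Defs.
From HB Require Import structures.
From mathcomp Require Import all_boot all_order all_algebra.
From mathcomp Require Import boolp functions.
From mathcomp Require Import zify ring.
From Stdlib Require Import Lia.
Import Order.TTheory GRing.Theory Num.Theory.
Set Implicit Arguments. Unset Strict Implicit. Unset Printing Implicit Defensive.
Local Open Scope ring_scope.

Definition spsum (A : pzRingType) (s : seq A) (F : seq A -> seq A -> A) : A :=
  \sum_(k < (size s).+1) F (take k s) (drop k s).

Lemma spsum_nil (A : pzRingType) (F : seq A -> seq A -> A) :
  spsum [::] F = F [::] [::].
Proof. by rewrite /spsum big_ord_recl big_ord0 addr0. Qed.

Lemma spsum_cons (A : pzRingType) (e : A) s (F : seq A -> seq A -> A) :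
  spsum (e :: s) F = F [::] (e :: s) + spsum s (fun x y => F (e :: x) y).
Proof. by rewrite /spsum big_ord_recl. Qed.

Lemma spsum_ext (A : pzRingType) s (F G : seq A -> seq A -> A) :
  (forall x y, F x y = G x y) -> spsum s F = spsum s G.
Proof. by move=> H; apply: eq_bigr => i _; apply: H. Qed.

Lemma spsum_in (A : pzRingType) s (F G : seq A -> seq A -> A) :
  (forall x y, x ++ y = s -> F x y = G x y) -> spsum s F = spsum s G.
Proof. by move=> H; apply: eq_bigr => i _; apply: H; rewrite cat_take_drop. Qed.

Lemma spsum0 (A : pzRingType) s (F : seq A -> seq A -> A) :
  (forall x y, F x y = 0) -> spsum s F = 0.
Proof. by move=> H; apply: big1 => i _; apply: H. Qed.

Lemma spsumD (A : pzRingType) s (F G : seq A -> seq A -> A) :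
  spsum s (fun x y => F x y + G x y) = spsum s F + spsum s G.
Proof. by rewrite /spsum big_split. Qed.

Lemma spsumN (A : pzRingType) s (F : seq A -> seq A -> A) :
  spsum s (fun x y => - F x y) = - spsum s F.
Proof. by rewrite /spsum sumrN. Qed.

Lemma spsumMl (A : pzRingType) s (a : A) (F : seq A -> seq A -> A) :
  spsum s (fun x y => a * F x y) = a * spsum s F.
Proof. by rewrite /spsum mulr_sumr. Qed.

Lemma spsumMr (A : pzRingType) s (a : A) (F : seq A -> seq A -> A) :
  spsum s (fun x y => F x y * a) = spsum s F * a.
Proof. by rewrite /spsum mulr_suml. Qed.

Lemma spsum_exch (A : pzRingType) s t (F : seq A -> seq A -> seq A -> seq A -> A) :
  spsum s (fun x y => spsum t (fun u v => F x y u v)) =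
  spsum t (fun u v => spsum s (fun x y => F x y u v)).
Proof. by rewrite /spsum exchange_big. Qed.

Lemma spsum_cat_cons (A : pzRingType) (x : seq A) e z (F : seq A -> seq A -> A) :
  spsum (x ++ e :: z) F =
  spsum x (fun a b => F a (b ++ e :: z)) + spsum z (fun a b => F (x ++ e :: a) b).
Proof.
elim: x F => [|h x IH] F.
  by rewrite cat0s spsum_nil spsum_cons.
by rewrite cat_cons spsum_cons IH spsum_cons addrA.
Qed.

Lemma spsum_assoc (A : pzRingType) s (F : seq A -> seq A -> seq A -> A) :
  spsum s (fun x r => spsum r (fun y z => F x y z)) =
  spsum s (fun q z => spsum q (fun x y => F x y z)).
Proof.
elim: s F => [|e s IH] F.
  by rewrite !spsum_nil.
rewrite [LHS]spsum_cons (IH (fun x y z => F (e :: x) y z)).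
rewrite [RHS]spsum_cons spsum_nil [spsum (e :: s) _]spsum_cons.
under [X in _ = _ + X]spsum_ext => q z do rewrite spsum_cons.
by rewrite spsumD !addrA.
Qed.

Lemma spsum_x0 (A : pzRingType) s (F : seq A -> seq A -> A) :
  (forall e x y, F (e :: x) y = 0) -> spsum s F = F [::] s.
Proof.
case: s => [|e s] H; first by rewrite spsum_nil.
by rewrite spsum_cons spsum0 ?addr0.
Qed.

Lemma spsum_y0 (A : pzRingType) s (F : seq A -> seq A -> A) :
  (forall x e y, F x (e :: y) = 0) -> spsum s F = F s [::].
Proof.
elim: s F => [|e s IH] F H; first by rewrite spsum_nil.
rewrite spsum_cons H add0r (IH (fun x y => F (e :: x) y)) //.
Qed.

Lemma spsum_y1 (A : pzRingType) e s (F : seq A -> seq A -> A) :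
  (forall x y, size y != 1%N -> F x y = 0) ->
  spsum (e :: s) F = F (belast e s) [:: last e s].
Proof.
elim: s e F => [|e' s IH] e F H.
  by rewrite spsum_cons spsum_nil /= (H [:: e] [::]) ?addr0.
rewrite spsum_cons H // add0r (IH e' (fun x y => F (e :: x) y)) //.
by move=> x y; apply: H.
Qed.

Lemma spsum_x1 (A : pzRingType) e s (F : seq A -> seq A -> A) :
  (forall x y, size x != 1%N -> F x y = 0) ->
  spsum (e :: s) F = F [:: e] s.
Proof.
move=> H; rewrite spsum_cons H // add0r spsum_x0 //.
by move=> e' x y; apply: H.
Qed.

Lemma spsum0_in (A : pzRingType) s (F : seq A -> seq A -> A) :
  (forall x y, x ++ y = s -> F x y = 0) -> spsum s F = 0.
Proof. by move=> H; apply: big1 => i _; apply: H; rewrite cat_take_drop. Qed.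

Definition sg (A : pzRingType) (i n : nat) : A := (-1) ^+ (i * n.+1).

Lemma sgE (A : pzRingType) i n : sg A i n = if odd (i * n.+1) then -1 else 1.
Proof. by rewrite /sg -signr_odd; case: odd. Qed.

Lemma signE (A : pzRingType) k : (-1) ^+ k = (if odd k then -1 else 1 : A).
Proof. by rewrite -signr_odd; case: odd. Qed.

Lemma braceE (A : pzRingType) (f g : cochain A) s :
  brace f g s = spsum s (fun x r => spsum r (fun y z =>
     sg A (size x) (size y) * f (x ++ g y :: z))).
Proof.
rewrite /brace /spsum; apply: eq_bigr => i _.
have hi : (i <= size s)%N by rewrite -ltnS.
rewrite size_drop -subSn //; apply: eq_bigr => n _.
have hn : (n <= size (drop i s))%N.
  by rewrite size_drop -ltnS -subSn //; apply: ltn_ord.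
by rewrite /sg size_takel // size_takel // drop_drop addnC.
Qed.

Lemma cupE (A : pzRingType) (f g : cochain A) s :
  cup f g s = spsum s (fun x y => f x * g y).
Proof. by []. Qed.

Lemma coch_supp (A : pzRingType) n (f : cochain A) s :
  is_cochain n f -> size s != n -> f s = 0.
Proof. by case=> H _; apply: H. Qed.

Lemma cochD (A : pzRingType) n (f : cochain A) u v a b :
  is_cochain n f -> f (u ++ (a + b) :: v) = f (u ++ a :: v) + f (u ++ b :: v).
Proof.
case=> Hs Ha; have [e|ne] := eqVneq (size u + size v).+1 n; first exact: Ha.
by rewrite !Hs ?addr0 // size_cat /= addnS.
Qed.

Lemma coch0 (A : pzRingType) n (f : cochain A) u v :
  is_cochain n f -> f (u ++ 0 :: v) = 0.
Proof.
move=> Hf; have := cochD u v 0 0 Hf; rewrite addr0 => /eqP.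
by rewrite -subr_eq subrr eq_sym => /eqP.
Qed.

Lemma cochN (A : pzRingType) n (f : cochain A) u v a :
  is_cochain n f -> f (u ++ (- a) :: v) = - f (u ++ a :: v).
Proof.
move=> Hf; apply/eqP; rewrite -addr_eq0 -(cochD _ _ _ _ Hf) addNr.
by rewrite (coch0 _ _ Hf).
Qed.

Lemma cochsign (A : pzRingType) n (f : cochain A) u v k a :
  is_cochain n f -> f (u ++ ((-1) ^+ k * a) :: v) = (-1) ^+ k * f (u ++ a :: v).
Proof.
move=> Hf; rewrite !signE; case: (odd k); last by rewrite !mul1r.
by rewrite !mulN1r (cochN _ _ _ Hf).
Qed.

Lemma cochsg (A : pzRingType) n (f : cochain A) u v i j a :
  is_cochain n f -> f (u ++ (sg A i j * a) :: v) = sg A i j * f (u ++ a :: v).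
Proof. exact: cochsign. Qed.

Lemma cochsum (A : pzRingType) n (f : cochain A) u v (I : Type) (r : seq I) (F : I -> A) :
  is_cochain n f -> f (u ++ (\sum_(i <- r) F i) :: v) = \sum_(i <- r) f (u ++ F i :: v).
Proof.
move=> Hf; elim: r => [|i r IH]; first by rewrite !big_nil (coch0 _ _ Hf).
by rewrite !big_cons (cochD _ _ _ _ Hf) IH.
Qed.

Lemma cochspsum (A : pzRingType) n (f : cochain A) u v s (F : seq A -> seq A -> A) :
  is_cochain n f -> f (u ++ (spsum s F) :: v) = spsum s (fun x y => f (u ++ F x y :: v)).
Proof. move=> Hf; rewrite /spsum. exact: (@cochsum A n f u v _ _ (fun k : 'I_(size s).+1 => F (take k s) (drop k s)) Hf). Qed.

Lemma cochMn (A : pzRingType) n (f : cochain A) u v a k :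
  is_cochain n f -> f (u ++ (a *+ k) :: v) = f (u ++ a :: v) *+ k.
Proof.
move=> Hf; elim: k => [|k IH]; first by rewrite !mulr0n (coch0 _ _ Hf).
by rewrite !mulrS (cochD _ _ _ _ Hf) IH.
Qed.

Lemma faddE (A : pzRingType) (f g : cochain A) s : (f + g) s = f s + g s.
Proof. by []. Qed.
Lemma foppE (A : pzRingType) (f : cochain A) s : (- f) s = - f s.
Proof. by []. Qed.
Lemma f0E (A : pzRingType) s : (0 : cochain A) s = 0.
Proof. by []. Qed.
Lemma fsubE (A : pzRingType) (f g : cochain A) s : (f - g) s = f s - g s.
Proof. by []. Qed.
Lemma fmulrnE (A : pzRingType) (f : cochain A) k s : (f *+ k) s = f s *+ k.
Proof. by rewrite natmulfctE. Qed.
Lemma fmulrzE (A : pzRingType) (f : cochain A) (k : int) s : (f *~ k) s = f s *~ k.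
Proof.
case: k => k; first by rewrite -!pmulrn fmulrnE.
by rewrite NegzE !mulrNz -!pmulrn foppE fmulrnE.
Qed.
Lemma fsumE (A : pzRingType) (I : Type) (r : seq I) (P : pred I) (F : I -> cochain A) s :
  (\sum_(i <- r | P i) F i) s = \sum_(i <- r | P i) F i s.
Proof. by rewrite fct_sumE. Qed.

Lemma brace_addl (A : pzRingType) (f g h : cochain A) :
  brace (f + g) h = brace f h + brace g h.
Proof.
apply/funext => s; rewrite faddE /brace -big_split; apply: eq_bigr => i _.
by rewrite -big_split; apply: eq_bigr => n _; rewrite mulrDr.
Qed.

Lemma brace0l (A : pzRingType) (h : cochain A) : brace 0 h = 0.
Proof.
apply/funext => s; rewrite f0E /brace big1 // => i _.
by rewrite big1 // => n _; rewrite mulr0.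
Qed.

Lemma brace_oppl (A : pzRingType) (f h : cochain A) : brace (- f) h = - brace f h.
Proof.
apply/funext => s; rewrite foppE /brace -sumrN; apply: eq_bigr => i _.
by rewrite -sumrN; apply: eq_bigr => n _; rewrite mulrN.
Qed.

Lemma brace_subl (A : pzRingType) (f g h : cochain A) :
  brace (f - g) h = brace f h - brace g h.
Proof. by rewrite brace_addl brace_oppl. Qed.

Lemma brace_mulrnl (A : pzRingType) (f h : cochain A) k :
  brace (f *+ k) h = brace f h *+ k.
Proof.
elim: k => [|k IH]; first by rewrite !mulr0n brace0l.
by rewrite !mulrS brace_addl IH.
Qed.

Lemma brace_suml (A : pzRingType) (I : Type) (r : seq I) (F : I -> cochain A) h :
  brace (\sum_(i <- r) F i) h = \sum_(i <- r) brace (F i) h.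
Proof.
elim: r => [|i r IH]; first by rewrite !big_nil brace0l.
by rewrite !big_cons brace_addl IH.
Qed.

Lemma brace_addr (A : pzRingType) n (f g h : cochain A) :
  is_cochain n f -> brace f (g + h) = brace f g + brace f h.
Proof.
move=> Hf; apply/funext => s; rewrite faddE !braceE -spsumD; apply: spsum_ext => x r.
rewrite -spsumD; apply: spsum_ext => y z.
by rewrite (cochD _ _ _ _ Hf) mulrDr.
Qed.

Lemma brace0r (A : pzRingType) n (f : cochain A) :
  is_cochain n f -> brace f 0 = 0.
Proof.
move=> Hf; apply/funext => s; rewrite f0E braceE spsum0 // => x r.
by rewrite spsum0 // => y z; rewrite (coch0 _ _ Hf) mulr0.
Qed.

Lemma brace_oppr (A : pzRingType) n (f g : cochain A) :
  is_cochain n f -> brace f (- g) = - brace f g.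
Proof.
move=> Hf; apply/eqP; rewrite -addr_eq0 -(brace_addr _ _ Hf) addNr.
by rewrite (brace0r Hf).
Qed.

Lemma brace_subr (A : pzRingType) n (f g h : cochain A) :
  is_cochain n f -> brace f (g - h) = brace f g - brace f h.
Proof. by move=> Hf; rewrite (brace_addr _ _ Hf) (brace_oppr _ Hf). Qed.

Lemma brace_mulrnr (A : pzRingType) n (f h : cochain A) k :
  is_cochain n f -> brace f (h *+ k) = brace f h *+ k.
Proof.
move=> Hf; elim: k => [|k IH]; first by rewrite !mulr0n (brace0r Hf).
by rewrite !mulrS (brace_addr _ _ Hf) IH.
Qed.

Lemma brace_sumr (A : pzRingType) n (f : cochain A) (I : Type) (r : seq I) (F : I -> cochain A) :
  is_cochain n f -> brace f (\sum_(i <- r) F i) = \sum_(i <- r) brace f (F i).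
Proof.
move=> Hf; elim: r => [|i r IH]; first by rewrite !big_nil (brace0r Hf).
by rewrite !big_cons (brace_addr _ _ Hf) IH.
Qed.

Lemma coch_add (A : pzRingType) n (f g : cochain A) :
  is_cochain n f -> is_cochain n g -> is_cochain n (f + g).
Proof.
move=> [Sf Af] [Sg Ag]; split=> [s hs|s t a b hst]; rewrite !faddE.
  by rewrite Sf // Sg // addr0.
by rewrite Af // Ag // addrACA.
Qed.

Lemma coch_zero (A : pzRingType) n : is_cochain n (0 : cochain A).
Proof. by split=> *; rewrite !f0E ?addr0. Qed.

Lemma coch_opp (A : pzRingType) n (f : cochain A) :
  is_cochain n f -> is_cochain n (- f).
Proof.
move=> [Sf Af]; split=> [s hs|s t a b hst]; rewrite !foppE.
  by rewrite Sf // oppr0.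
by rewrite Af // opprD.
Qed.

Lemma coch_sub (A : pzRingType) n (f g : cochain A) :
  is_cochain n f -> is_cochain n g -> is_cochain n (f - g).
Proof. by move=> Hf Hg; apply: coch_add => //; apply: coch_opp. Qed.

Lemma coch_mulrn (A : pzRingType) n (f : cochain A) k :
  is_cochain n f -> is_cochain n (f *+ k).
Proof.
move=> Hf; elim: k => [|k IH]; first by rewrite mulr0n; apply: coch_zero.
by rewrite mulrS; apply: coch_add.
Qed.

Lemma coch_mulrz (A : pzRingType) n (f : cochain A) (k : int) :
  is_cochain n f -> is_cochain n (f *~ k).
Proof.
move=> Hf; case: k => k; first by apply: coch_mulrn.
by rewrite NegzE mulrNz; apply/coch_opp/coch_mulrn.
Qed.

Lemma coch_sum (A : pzRingType) n (I : Type) (r : seq I) (P : pred I) (F : I -> cochain A) :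
  (forall i, P i -> is_cochain n (F i)) -> is_cochain n (\sum_(i <- r | P i) F i).
Proof.
move=> H; elim: r => [|i r IH]; first by rewrite big_nil; apply: coch_zero.
rewrite big_cons; case: ifP => // Pi; exact: coch_add (H _ Pi) IH.
Qed.

Lemma coch_eq (A : pzRingType) n m (f : cochain A) :
  n = m -> is_cochain n f -> is_cochain m f.
Proof. by move=> ->. Qed.

Lemma cat_cons3 (T : Type) (x y z : seq T) a b :
  x ++ a :: y ++ b :: z = (x ++ a :: y) ++ b :: z.
Proof. by rewrite -catA. Qed.

Lemma add3ACA (A : zmodType) (x1 x2 x3 y1 y2 y3 : A) :
  (x1 + y1) + (x2 + y2) + (x3 + y3) = x1 + x2 + x3 + (y1 + y2 + y3).
Proof. by rewrite (addrACA x1 y1 x2 y2) (addrACA (x1 + x2) (y1 + y2) x3 y3). Qed.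

Lemma coch_cup (A : pzRingType) m n (f g : cochain A) :
  is_cochain m f -> is_cochain n g -> is_cochain (m + n) (cup f g).
Proof.
move=> Hf Hg; split=> [s hs|u v a b _].
  rewrite cupE; apply: spsum0_in => x y exy; have [ex|nx] := eqVneq (size x) m.
    have ny : size y != n.
      by apply: contraNneq hs => <-; rewrite -exy size_cat ex.
    by rewrite (coch_supp Hg ny) mulr0.
  by rewrite (coch_supp Hf nx) mul0r.
rewrite !cupE !spsum_cat_cons.
under spsum_ext => x y do rewrite (cochD _ _ _ _ Hg) mulrDr.
under [X in _ + X = _]spsum_ext => x y do rewrite (cochD _ _ _ _ Hf) mulrDl.
by rewrite !spsumD addrACA.
Qed.

Lemma brace_at (A : pzRingType) (f g : cochain A) u e v :
  brace f g (u ++ e :: v) =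
    spsum u (fun x r => spsum r (fun y y' =>
        sg A (size x) (size y) * f ((x ++ g y :: y') ++ e :: v)))
  + spsum u (fun x r => spsum v (fun c1 c2 =>
        sg A (size x) (size r + (size c1).+1) * f (x ++ g (r ++ e :: c1) :: c2)))
  + spsum v (fun c1 c2 => spsum c2 (fun y z =>
        sg A (size u + (size c1).+1) (size y) * f (u ++ e :: c1 ++ g y :: z))).
Proof.
rewrite braceE spsum_cat_cons.
under spsum_ext => x r do rewrite spsum_cat_cons.
rewrite spsumD; congr (_ + _ + _).
- by apply: spsum_ext => x r; apply: spsum_ext => y y'; rewrite -cat_cons3.
- by apply: spsum_ext => x r; apply: spsum_ext => y y'; rewrite size_cat.
- by apply: spsum_ext => x r; apply: spsum_ext => y y'; rewrite size_cat -catA.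
Qed.

Lemma coch_brace (A : pzRingType) m n (f g : cochain A) :
  is_cochain m f -> is_cochain n g -> (0 < m)%N -> is_cochain (m + n).-1 (brace f g).
Proof.
move=> Hf Hg m0; split=> [s hs|u v a b _].
  rewrite braceE; apply: spsum0_in => x r exr; apply: spsum0_in => y z eyz.
  have [ey|ny] := eqVneq (size y) n; last by rewrite (coch_supp Hg ny) (coch0 _ _ Hf) mulr0.
  have nx : size (x ++ g y :: z) != m.
    apply: contraNneq hs => H; rewrite -exr -eyz !size_cat ey.
    move: H; rewrite size_cat /= => H; lia.
  by rewrite (coch_supp Hf nx) mulr0.
rewrite !brace_at.
under spsum_ext => x r do under spsum_ext => y y' do
  rewrite (cochD _ _ _ _ Hf) mulrDr.
under [X in _ + X + _ = _]spsum_ext => x r do under spsum_ext => y y' do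
  rewrite (cochD _ _ _ _ Hg) (cochD _ _ _ _ Hf) mulrDr.
under [X in _ + X = _]spsum_ext => x r do under spsum_ext => y y' do
  rewrite (cochD _ _ _ _ Hf) mulrDr.
under spsum_ext => x r do rewrite spsumD.
under [X in _ + X + _ = _]spsum_ext => x r do rewrite spsumD.
under [X in _ + X = _]spsum_ext => x r do rewrite spsumD.
by rewrite !spsumD add3ACA.
Qed.

Definition mu (A : pzRingType) : cochain A :=
  fun s => if s is [:: a; b] then a * b else 0.
Definition iot (A : pzRingType) : cochain A :=
  fun s => if s is [:: a] then a else 0.
Arguments mu {A}.
Arguments iot {A}.

Lemma mu_size (A : pzRingType) (l : seq A) : size l != 2%N -> mu l = 0.
Proof. by case: l => [|a [|b [|c l]]]. Qed.

Lemma iot_size (A : pzRingType) (l : seq A) : size l != 1%N -> iot l = 0.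
Proof. by case: l => [|a [|b l]]. Qed.

Lemma coch_iot (A : pzRingType) : is_cochain 1 (@iot A).
Proof.
split=> [s|s t a b]; first exact: iot_size.
by case: s => [|x s] //; case: t.
Qed.

Lemma sg0 (A : pzRingType) n : sg A 0 n = 1.
Proof. by rewrite /sg mul0n expr0. Qed.

Lemma sg_odd (A : pzRingType) i n : odd n -> sg A i n = 1.
Proof. by move=> h; rewrite sgE oddM /= h andbF. Qed.

Lemma brace_iot (A : pzRingType) (X : cochain A) s : brace iot X s = X s.
Proof.
rewrite braceE spsum_x0 => [|e x r]; last first.
  by apply: spsum0 => y z; case: x => [|? ?]; rewrite /= mulr0.
rewrite spsum_y0 => [|x e y]; last by rewrite /= mulr0.
by rewrite /= sg0 mul1r.
Qed.

Lemma brace_mu_l (A : pzRingType) n (f : cochain A) s :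
  is_cochain n f -> odd n -> brace mu f s = cup f iot s + cup iot f s.
Proof.
move=> Hf on; case: s => [|e t].
  by rewrite braceE !spsum_nil !cupE !spsum_nil /= !mulr0 mul0r addr0.
rewrite braceE spsum_cons !cupE spsum_y1 => [|x y]; last first.
  by case: y => [|? [|? ?]]; rewrite /= ?mulr0.
rewrite spsum_y1 => [|x y]; last by case: y => [|? [|? ?]]; rewrite /= ?mulr0.
rewrite spsum_x1 => [|x y]; last by case: x => [|? [|? ?]]; rewrite /= ?mul0r.
rewrite spsum_x0 => [|e' x r]; last first.
  by apply: spsum0 => y z; case: x => [|? ?]; rewrite /= mulr0.
rewrite spsum_y0 => [|x e' y]; last by rewrite /= mulr0.
rewrite /= sg0 mul1r; congr (_ + _).
have [ht|ht] := eqVneq (size t) n; first by rewrite sg_odd ?ht // mul1r.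
by rewrite (coch_supp Hf ht) !mulr0.
Qed.

Lemma sum_single (A : zmodType) K j (F : nat -> A) :
  (forall k, (k < K)%N -> k != j -> F k = 0) ->
  \sum_(k < K) F k = if (j < K)%N then F j else 0.
Proof.
move=> H; case: ifP => hj.
  rewrite (bigD1 (Ordinal hj)) //= big1 ?addr0 // => k hk.
  by apply: H => //; apply: contraNneq hk => e; apply/eqP/val_inj.
by apply: big1 => k _; apply: H => //; apply: contraFneq hj => <-.
Qed.

Lemma brace_mu_r (A : pzRingType) n (f : cochain A) s :
  is_cochain n f ->
  brace f mu s = \sum_(i < (size s).-1) (-1) ^+ i * f (mergeat i s).
Proof.
move=> Hf; rewrite /brace.
have inner : forall i : 'I_(size s).+1,
  \sum_(k < (size s).+1 - i) (-1) ^+ (i * k.+1) * f (take i s ++ mu (take k (drop i s)) :: drop (i + k) s)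
  = if (2 < (size s).+1 - i)%N then (-1) ^+ (i * 3) * f (take i s ++ mu (take 2 (drop i s)) :: drop (i + 2) s) else 0.
  move=> i; apply: (@sum_single _ _ 2%N (fun k => (-1) ^+ (i * k.+1) * f (take i s ++ mu (take k (drop i s)) :: drop (i + k) s))).
  move=> k hk hk2; rewrite mu_size ?(coch0 _ _ Hf) ?mulr0 //.
  by rewrite size_takel // size_drop; move: hk; rewrite subSn; [|rewrite -ltnS; apply: ltn_ord].
under eq_bigr => i _ do rewrite inner.
rewrite -big_mkcond /=.
rewrite -(big_mkord (fun i => (2 < (size s).+1 - i)%N) (fun i => (-1) ^+ (i * 3) *
     f (take i s ++ mu (take 2 (drop i s)) :: drop (i + 2) s))).
rewrite -(big_mkord xpredT (fun i => (-1) ^+ i * f (mergeat i s))).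
rewrite (@big_nat_widen _ _ _ 0 (size s).-1 (size s).+1); last by lia.
rewrite big_mkcond [RHS]big_mkcond; apply: eq_bigr => i _ /=.
have -> : (2 < (size s).+1 - i)%N = (i < (size s).-1)%N by lia.
case: ifP => // hi.
rewrite signE oddM /= andbT -signE /mergeat addn2; congr (_ * f (_ ++ _ :: _)).
have h1 : (i.+1 < size s)%N by move: hi; case: (size s).
rewrite (drop_nth 0) ?(drop_nth 0 (n := i.+1)) //; first by rewrite /= take0. 
exact: ltn_trans h1.
Qed.

Lemma hdiff_eq (A : pzRingType) n (f : cochain A) s :
  is_cochain n f -> odd n -> hdiff f s = cup f iot s + cup iot f s - brace f mu s.
Proof.
move=> Hf on; rewrite (brace_mu_r _ Hf) !cupE.
case: s => [|e t].
  by rewrite !spsum_nil /= big_ord0 !mulr0 mul0r !addr0 subr0.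
rewrite spsum_y1 => [|x y]; last by move=> h; rewrite iot_size ?mulr0.
rewrite spsum_x1 => [|x y]; last by move=> h; rewrite iot_size ?mul0r.
rewrite /=.
have h1 : (-1) ^+ (size t).+1 * f (belast e t) * last e t = f (belast e t) * last e t.
  have [ht|ht] := eqVneq (size t) n.
    by rewrite signE /= ht on mul1r.
  by rewrite (coch_supp Hf (n := n)) ?size_belast // mulr0 mul0r.
have h2 : \sum_(i < size t) (-1) ^+ i.+1 * f (mergeat i (e :: t)) =
   - \sum_(i < size t) (-1) ^+ i * f (mergeat i (e :: t)).
  by rewrite -sumrN; apply: eq_bigr => i _; rewrite exprS mulN1r mulNr.
by rewrite h1 h2 addrC addrA.
Qed.

Lemma cup_at (A : pzRingType) (a b : cochain A) x e z :
  cup a b (x ++ e :: z) =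
  spsum x (fun u u' => a u * b (u' ++ e :: z)) + spsum z (fun c1 c2 => a (x ++ e :: c1) * b c2).
Proof. by rewrite cupE spsum_cat_cons. Qed.

Lemma hirsch (A : pzRingType) nb nc (a b c : cochain A) s :
  is_cochain nb b -> is_cochain nc c -> odd nc ->
  brace (cup a b) c s = cup a (brace b c) s + cup (brace a c) b s.
Proof.
move=> Hb Hc oc; rewrite braceE.
under spsum_ext => x r do under spsum_ext => y z do rewrite cup_at mulrDr.
under spsum_ext => x r do rewrite spsumD.
rewrite spsumD; congr (_ + _).
- transitivity (spsum s (fun x r => spsum x (fun u u' => spsum r (fun y z =>
     a u * (sg A (size u') (size y) * b (u' ++ c y :: z)))))).
    apply: spsum_ext => x r; rewrite spsum_exch; apply: spsum_ext => y z.
    rewrite -spsumMl; apply: spsum_ext => u u'.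
    have [ey|ny] := eqVneq (size y) nc.
      by rewrite !sg_odd ?ey // !mul1r.
    by rewrite (coch_supp Hc ny) (coch0 _ _ Hb) !mulr0.
  rewrite -(spsum_assoc s (fun u u' r => spsum r (fun y z =>
     a u * (sg A (size u') (size y) * b (u' ++ c y :: z))))).
  rewrite cupE; apply: spsum_ext => u w; rewrite braceE -spsumMl.
  by apply: spsum_ext => u' r; rewrite -spsumMl.
- transitivity (spsum s (fun x r => spsum r (fun y z => spsum z (fun c1 c2 =>
     sg A (size x) (size y) * a (x ++ c y :: c1) * b c2)))).
    apply: spsum_ext => x r; apply: spsum_ext => y z.
    by rewrite -spsumMl; apply: spsum_ext => c1 c2; rewrite mulrA.
  rewrite cupE.
  transitivity (spsum s (fun q c2 => spsum q (fun x r => spsum r (fun y c1 =>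
     sg A (size x) (size y) * a (x ++ c y :: c1) * b c2)))); last first.
    apply: spsum_ext => q c2; rewrite braceE -spsumMr; apply: spsum_ext => x r.
    by rewrite -spsumMr.
  transitivity (spsum s (fun x t => spsum t (fun r c2 => spsum r (fun y c1 =>
     sg A (size x) (size y) * a (x ++ c y :: c1) * b c2)))).
    apply: spsum_ext => x t.
    exact: (spsum_assoc t (fun y c1 c2 => sg A (size x) (size y) * a (x ++ c y :: c1) * b c2)).
  exact: (spsum_assoc s (fun x r c2 => spsum r (fun y c1 =>
     sg A (size x) (size y) * a (x ++ c y :: c1) * b c2))).
Qed.

Definition N5 (A : pzRingType) s (G : seq A -> seq A -> seq A -> seq A -> seq A -> A) :=
  spsum s (fun P r1 => spsum r1 (fun Q r2 => spsum r2 (fun R r3 =>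
     spsum r3 (fun S T => G P Q R S T)))).

Lemma sg_b (A : pzRingType) i j k l (F : A) :
  sg A (i + j) k * (sg A i (j + l.+1) * F) = sg A i (j + k + l) * (sg A j k * F).
Proof.
rewrite !mulrA /sg -!exprD; congr (_ * _).
rewrite !signE; congr (if _ then _ else _).
rewrite !(oddD, oddM, addnS) /=.
rewrite !oddD.
by case: (odd i); case: (odd j); case: (odd k); case: (odd l).
Qed.

Definition TA (A : pzRingType) (f h g : cochain A) s :=
  N5 s (fun P Q R S T => sg A (size P) (size Q) *
     (sg A (size P + (size R).+1) (size S) * f (P ++ h Q :: R ++ g S :: T))).
Definition TC (A : pzRingType) (f g h : cochain A) s :=
  N5 s (fun P Q R S T => sg A (size P + size Q + size R) (size S) *
     (sg A (size P) (size Q) * f (P ++ g Q :: R ++ h S :: T))).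

Lemma brace_brace (A : pzRingType) nf (f g h : cochain A) s :
  is_cochain nf f ->
  brace (brace f g) h s = brace f (brace g h) s + TA f h g s + TC f g h s.
Proof.
move=> Hf; rewrite braceE.
under spsum_ext => x r do under spsum_ext => y z do rewrite brace_at !mulrDr.
under spsum_ext => x r do rewrite !spsumD.
rewrite !spsumD.
have eb : spsum s (fun x r => spsum r (fun y z => sg A (size x) (size y) *
     spsum x (fun a r' => spsum z (fun c1 c2 =>
       sg A (size a) (size r' + (size c1).+1) * f (a ++ g (r' ++ h y :: c1) :: c2)))))
   = brace f (brace g h) s.
  transitivity (N5 s (fun a a' y c1 c2 => sg A (size a + size a') (size y) *
     (sg A (size a) (size a' + (size c1).+1) * f (a ++ g (a' ++ h y :: c1) :: c2)))).
    transitivity (spsum s (fun x r => spsum x (fun a a' => spsum r (fun y z => spsum z (fun c1 c2 =>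
       sg A (size a + size a') (size y) *
       (sg A (size a) (size a' + (size c1).+1) * f (a ++ g (a' ++ h y :: c1) :: c2))))))).
      apply: spsum_ext => x r; under spsum_ext => y z do rewrite -spsumMl.
      rewrite spsum_exch; apply: spsum_in => a a' e.
      apply: spsum_ext => y z; rewrite -spsumMl -e size_cat.
      by apply: spsum_ext => c1 c2.
    symmetry; exact: (spsum_assoc s (fun a a' r => spsum r (fun y z => spsum z (fun c1 c2 =>
       sg A (size a + size a') (size y) *
       (sg A (size a) (size a' + (size c1).+1) * f (a ++ g (a' ++ h y :: c1) :: c2)))))).
  symmetry; rewrite braceE.
  transitivity (spsum s (fun a r => spsum r (fun m c2 => spsum m (fun a' r2 => spsum r2 (fun y c1 =>
     sg A (size a) (size a' + size y + size c1) *
     (sg A (size a') (size y) * f (a ++ g (a' ++ h y :: c1) :: c2))))))).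
    apply: spsum_ext => a r; apply: spsum_ext => m c2.
    rewrite braceE (cochspsum _ _ _ _ Hf) -spsumMl; apply: spsum_in => a' r2 e.
    rewrite (cochspsum _ _ _ _ Hf) -spsumMl; apply: spsum_in => y c1 e'.
    by rewrite (cochsg _ _ _ _ _ Hf) -e -e' !size_cat addnA.
  rewrite /N5; apply: spsum_ext => a r.
  rewrite -(spsum_assoc r (fun a' r2 c2 => spsum r2 (fun y c1 =>
     sg A (size a) (size a' + size y + size c1) *
     (sg A (size a') (size y) * f (a ++ g (a' ++ h y :: c1) :: c2))))).
  apply: spsum_ext => a' t.
  rewrite -(spsum_assoc t (fun y c1 c2 =>
     sg A (size a) (size a' + size y + size c1) *
     (sg A (size a') (size y) * f (a ++ g (a' ++ h y :: c1) :: c2)))).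
  apply: spsum_ext => y t'; apply: spsum_ext => c1 c2.
  by rewrite sg_b.
have ea : spsum s (fun x r => spsum r (fun y z => sg A (size x) (size y) *
     spsum z (fun c1 c2 => spsum c2 (fun b c =>
       sg A (size x + (size c1).+1) (size b) * f (x ++ h y :: c1 ++ g b :: c)))))
   = TA f h g s.
  rewrite /TA /N5; apply: spsum_ext => x r; apply: spsum_ext => y z.
  rewrite -spsumMl; apply: spsum_ext => c1 c2.
  by rewrite -spsumMl.
have ec : spsum s (fun x r => spsum r (fun y z => sg A (size x) (size y) *
     spsum x (fun a r' => spsum r' (fun b b' =>
       sg A (size a) (size b) * f ((a ++ g b :: b') ++ h y :: z)))))
   = TC f g h s.
  rewrite /TC /N5.
  transitivity (spsum s (fun x r => spsum x (fun a r' => spsum r' (fun b b' => spsum r (fun y z =>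
     sg A (size a + size b + size b') (size y) *
     (sg A (size a) (size b) * f (a ++ g b :: b' ++ h y :: z))))))).
    apply: spsum_ext => x r; under spsum_ext => y z do rewrite -spsumMl.
    rewrite spsum_exch; apply: spsum_in => a r' e.
    under spsum_ext => y z do rewrite -spsumMl.
    rewrite spsum_exch; apply: spsum_in => b b' e'.
    apply: spsum_ext => y z.
    by rewrite -e -e' !size_cat addnA cat_cons3.
  rewrite -(spsum_assoc s (fun a r' r => spsum r' (fun b b' => spsum r (fun y z =>
     sg A (size a + size b + size b') (size y) *
     (sg A (size a) (size b) * f (a ++ g b :: b' ++ h y :: z)))))).
  apply: spsum_ext => a t.
  symmetry; exact: (spsum_assoc t (fun b b' r => spsum r (fun y z =>
     sg A (size a + size b + size b') (size y) *
     (sg A (size a) (size b) * f (a ++ g b :: b' ++ h y :: z))))).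
by rewrite ec eb ea [RHS]addrC addrA.
Qed.

Lemma N5_ext (A : pzRingType) s (F G : seq A -> seq A -> seq A -> seq A -> seq A -> A) :
  (forall P Q R S T, F P Q R S T = G P Q R S T) -> N5 s F = N5 s G.
Proof.
move=> H; rewrite /N5; apply: spsum_ext => P r1; apply: spsum_ext => Q r2.
by apply: spsum_ext => R r3; apply: spsum_ext => S T.
Qed.

Lemma zmod4 (A : zmodType) (a b c d : A) : a + c + d = b + d + c + a - b.
Proof.
rewrite [RHS]addrC !addrA addNr add0r.
by rewrite [LHS]addrC (addrC a c) addrA.
Qed.

Lemma preLie (A : pzRingType) nf ng (f g h : cochain A) s :
  is_cochain nf f -> is_cochain ng g -> odd ng ->
  brace (brace f g) h s = brace (brace f h) g s + brace f (brace g h) s - brace f (brace h g) s.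
Proof.
move=> Hf Hg og; rewrite !(brace_brace _ _ _ Hf).
have e1 : TA f h g s = TC f h g s.
  apply: N5_ext => P Q R S T.
  have [eS|nS] := eqVneq (size S) ng.
    have o : odd (size S) by rewrite eS.
    by rewrite [sg _ _ (size S)]sg_odd // [sg _ _ (size S)]sg_odd // !mul1r.
  by rewrite (coch_supp Hg nS) cat_cons3 (coch0 _ _ Hf) !mulr0.
have e2 : TC f g h s = TA f g h s.
  apply: N5_ext => P Q R S T.
  have [eQ|nQ] := eqVneq (size Q) ng.
    have o : odd (size Q) by rewrite eQ.
    rewrite [sg _ _ (size Q)]sg_odd // !mul1r; congr (_ * _).
    by rewrite !sgE !(oddM, oddD) eQ og /=; case: (odd (size P)); case: (odd (size R)).
  by rewrite (coch_supp Hg nQ) (coch0 _ _ Hf) !mulr0.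
rewrite e1 e2.
exact: zmod4.
Qed.

Lemma zF2 (A : zmodType) (a b c d e f g : A) :
  c + d - (e + f - g) = a + c + (d + b) - e + (g - f) - a - b.
Proof.
rewrite [RHS](AC (((((2*2)*1)*2)*1)*1) (((1*8)*(4*9))*((2*3)*((5*7)*6)))).
by rewrite /= !addrN !add0r opprB opprD [g + _]addrC !addrA.
Qed.

Lemma hdiff_brace (A : pzRingType) m d (Y X : cochain A) s :
  is_cochain m Y -> odd m -> is_cochain d X -> odd d ->
  hdiff (brace Y X) s = brace (hdiff Y) X s + brace Y (hdiff X) s - cup Y X s - cup X Y s.
Proof.
move=> HY oY HX oX.
have m0 : (0 < m)%N by case: m oY {HY}.
have HYX := coch_brace HY HX m0.
have oYX : odd (m + d).-1 by move: oY oX; case: m m0 {HY HYX} => // m' _; rewrite addSn /= oddD => /negbTE -> ->.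
have hY : hdiff Y = cup Y iot + cup iot Y - brace Y mu.
  by apply/funext => t; rewrite (hdiff_eq _ HY oY).
have hX : hdiff X = brace mu X - brace X mu.
  by apply/funext => t; rewrite (hdiff_eq _ HX oX) fsubE (brace_mu_l _ HX oX).
have iX : brace iot X = X by apply/funext => t; rewrite brace_iot.
rewrite (hdiff_eq _ HYX oYX) hY hX brace_subl brace_addl (brace_subr _ _ HY).
rewrite !fsubE !faddE (hirsch _ _ (coch_iot A) HX oX) (hirsch _ _ HY HX oX) iX.
rewrite (preLie _ _ HY HX oX).
exact: zF2.
Qed.

Definition Rop (A : pzRingType) (X f : cochain A) := brace f X.
Definition Adop (A : pzRingType) (X f : cochain A) := brace X f - brace f X.
Definition Bsum (A : pzRingType) (X : cochain A) n W :=
  \sum_(0 <= m < n.+1) iter (n - m) (Rop X) (iter m (Adop X) W) *+ 'C(n, m).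

Lemma Rop_sum (A : pzRingType) (X : cochain A) (I : Type) (r : seq I) (F : I -> cochain A) :
  Rop X (\sum_(i <- r) F i) = \sum_(i <- r) Rop X (F i).
Proof. exact: brace_suml. Qed.

Lemma Rop_mulrn (A : pzRingType) (X f : cochain A) k : Rop X (f *+ k) = Rop X f *+ k.
Proof. exact: brace_mulrnl. Qed.

Lemma Rop_add (A : pzRingType) (X f g : cochain A) : Rop X (f + g) = Rop X f + Rop X g.
Proof. exact: brace_addl. Qed.

Lemma Rop_sub (A : pzRingType) (X f g : cochain A) : Rop X (f - g) = Rop X f - Rop X g.
Proof. exact: brace_subl. Qed.

Lemma Rop0 (A : pzRingType) (X : cochain A) : Rop X 0 = 0.
Proof. exact: brace0l. Qed.

Lemma Bsum_pascal (A : pzRingType) (X : cochain A) n W :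
  Bsum X n.+1 W = Rop X (Bsum X n W) + Bsum X n (Adop X W).
Proof.
rewrite /Bsum big_nat_recl // subn0 bin0 mulr1n.
under eq_bigr => i _ do rewrite subSS binS mulrnDr iterSr.
rewrite big_split /= addrA; congr (_ + _).
rewrite [RHS]Rop_sum [RHS]big_nat_recl // subn0 bin0 mulr1n; congr (_ + _).
rewrite big_nat_recr // bin_small // mulr0n /= addr0.
rewrite big_nat_cond [RHS]big_nat_cond.
apply: eq_bigr => i; rewrite andbT => /andP [_ hi].
by rewrite Rop_mulrn -(iterS (n - i.+1)) subnSK // -iterS iterSr.
Qed.

Lemma coch_iterR (A : pzRingType) d (X : cochain A) m f k :
  is_cochain d X -> odd d -> is_cochain m f -> (0 < m)%N ->
  is_cochain (m + k * d.-1) (iter k (Rop X) f).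
Proof.
move=> HX oX Hf m0; elim: k => [|k IH]; first by rewrite mul0n addn0.
rewrite iterS /Rop; apply: coch_eq (coch_brace IH HX _); last by lia.
by case: d oX {HX IH} => // d _; rewrite mulSn /=; lia.
Qed.

Lemma brace_bpow (A : pzRingType) d (X : cochain A) n W :
  is_cochain d X -> odd d ->
  brace (iter n (Rop X) X) W = Bsum X n.+1 W.
Proof.
move=> HX oX; elim: n W => [|n IH] W.
  rewrite /Bsum !big_nat_recl // big_geq //= !mulr1n addr0 /Rop /Adop.
  by rewrite addrC subrK.
have d0 : (0 < d)%N by case: d oX {HX}.
have Hf := coch_iterR n HX oX HX d0.
rewrite Bsum_pascal -!IH.
transitivity (brace (brace (iter n (Rop X) X) X) W); first by [].
apply/funext => s.
rewrite (preLie _ _ Hf HX oX) /Rop /Adop (brace_subr _ _ Hf) faddE fsubE.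
by rewrite addrA.
Qed.

Definition Pw (A : pzRingType) (X : cochain A) j := iter j (Rop X) X.
Definition Kp (A : pzRingType) (X : cochain A) n :=
  \sum_(0 <= i < n.+1) cup (Pw X i) (Pw X (n - i)) *+ 'C(n.+2, i.+1).
Definition KK (A : pzRingType) (X : cochain A) n :=
  if n is n'.+1 then Kp X n' else 0.
Definition Vs (A : pzRingType) (X U : cochain A) k :=
  \sum_(0 <= m < k) iter (k.-1 - m) (Rop X) (iter m (Adop X) U) *+ 'C(k, m.+1).

Lemma coch_Pw (A : pzRingType) d (X : cochain A) j :
  is_cochain d X -> odd d -> is_cochain (d + j * d.-1) (Pw X j).
Proof. by move=> HX oX; apply: coch_iterR => //; case: d oX {HX}. Qed.

Lemma R_cup (A : pzRingType) d nb (X a b : cochain A) :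
  is_cochain d X -> odd d -> is_cochain nb b ->
  Rop X (cup a b) = cup a (Rop X b) + cup (Rop X a) b.
Proof. by move=> HX oX Hb; apply/funext => s; rewrite /Rop (hirsch _ _ Hb HX oX). Qed.

Lemma zAC5 (A : zmodType) (a b c d : A) : a + c + (d + b) = a + b + c + d.
Proof.
by rewrite [LHS](AC (2*2) (((1*4)*2)*3)).
Qed.

Lemma KK_rec (A : pzRingType) d (X : cochain A) n :
  is_cochain d X -> odd d ->
  KK X n.+1 = Rop X (KK X n) + cup (Pw X n) X + cup X (Pw X n).
Proof.
move=> HX oX; case: n => [|n].
  rewrite /= Rop0 add0r /Kp big_nat1 subnn /= mulr2n.
  by [].
rewrite /KK /Kp.
under eq_big_nat => i hi do rewrite binS mulrnDr.
rewrite big_split /= big_nat_recr // [X in _ + X = _]big_nat_recl //= subnn binn bin0 !mulr1n.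
rewrite Rop_sum.
under [in RHS]eq_big_nat => i hi do
  rewrite Rop_mulrn (R_cup _ HX oX (coch_Pw _ HX oX)) mulrnDl.
rewrite big_split /=.
have e1 : \sum_(0 <= i < n.+1) cup (Pw X i) (Pw X (n.+1 - i)) *+ 'C(n.+2, i.+1) =
          \sum_(0 <= i < n.+1) cup (Pw X i) (Rop X (Pw X (n - i))) *+ 'C(n.+2, i.+1).
  by apply: eq_big_nat => i hi; rewrite subSn //; lia.
rewrite e1.
have e2 : \sum_(0 <= i < n.+1) cup (Rop X (Pw X i)) (Pw X (n.+1 - i.+1)) *+ 'C(n.+2, i.+1) =
          \sum_(0 <= i < n.+1) cup (Rop X (Pw X i)) (Pw X (n - i)) *+ 'C(n.+2, i.+1).
  by apply: eq_big_nat => i hi; rewrite subSS.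
by rewrite e2 zAC5.
Qed.

Lemma Vs_rec (A : pzRingType) (X U : cochain A) n :
  Vs X U n.+2 = Rop X (Vs X U n.+1) + Bsum X n.+1 U.
Proof.
rewrite /Vs /Bsum.
under eq_big_nat => i hi do rewrite binS mulrnDr.
rewrite big_split /=; congr (_ + _).
rewrite big_nat_recr //= bin_small // mulr0n addr0 Rop_sum.
apply: eq_big_nat => i hi; rewrite Rop_mulrn -iterS subSn //; lia.
Qed.

Lemma zmain (A : zmodType) (a b c e f : A) p :
  a *+ p - b + c *+ p - e - f = (a + c) *+ p - (b + e + f).
Proof.
rewrite mulrnDl !opprD !addrA; congr (_ - _ - _).
by rewrite -!addrA (addrC (- b)).
Qed.

Lemma hdiff_Pw (A : pzRingType) d p (X U : cochain A) n :
  is_cochain d X -> odd d -> hdiff X = U *+ p ->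
  hdiff (Pw X n) = Vs X U n.+1 *+ p - KK X n.
Proof.
move=> HX oX hX; elim: n => [|n IH].
  by rewrite /Pw /= hX /Vs big_nat1 /= mulr1n subr0.
have d0 : (0 < d)%N by case: d oX {HX hX}.
have HP := coch_Pw n HX oX.
have oP : odd (d + n * d.-1).
  by case: d oX d0 {HX hX HP} => // d; rewrite oddD oddM /= => od _; rewrite (negbTE od) andbF addbF.
transitivity (hdiff (brace (Pw X n) X)); first by [].
apply/funext => s.
rewrite (hdiff_brace _ HP oP HX oX) IH hX (brace_mulrnr _ _ HP).
rewrite -[brace (_ *+ p - _) X]/(Rop X (_ *+ p - _)) Rop_sub Rop_mulrn.
rewrite /Pw (brace_bpow _ _ HX oX) -/(Pw X n).
rewrite Vs_rec (KK_rec _ HX oX) -zmain.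
by [].
Qed.

Lemma dvdz_natE (d n : nat) : (d%:Z %| n%:Z)%Z = (d %| n)%N.
Proof. by rewrite dvdzE. Qed.

Lemma binm1 p j : prime p -> (j < p)%N ->
  (p%:Z %| ('C(p.-1, j))%:Z - (-1) ^+ j)%Z.
Proof.
move=> pp; elim: j => [|j IH] hj; first by rewrite bin0 expr0 subrr dvdz0.
have hp : p = p.-1.+1 by rewrite prednK // prime_gt0.
have e : ('C(p.-1, j.+1))%:Z - (-1) ^+ j.+1 =
         ('C(p, j.+1))%:Z - (('C(p.-1, j))%:Z - (-1) ^+ j).
  have hb : ('C(p, j.+1))%:Z = ('C(p.-1, j.+1))%:Z + ('C(p.-1, j))%:Z.
    by rewrite {1}hp binS PoszD.
  rewrite hb exprS; ring.
rewrite e; apply: rpredB; last by apply: IH; lia.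
by rewrite dvdz_natE prime_dvd_bin.
Qed.

Lemma cdiv p i (ci : int) : prime p -> (0 < i < p)%N ->
  (p%:Z %| ci * i%:Z - (-1) ^+ i)%Z ->
  (p%:Z %| ci + ('C(p, i) %/ p)%N%:Z)%Z.
Proof.
move=> pp /andP [i0 ip] hc.
have hb : (i * ('C(p, i) %/ p))%N = 'C(p.-1, i.-1).
  have h1 : (p %| 'C(p, i))%N by apply: prime_dvd_bin => //; apply/andP.
  have h2 := mul_bin_diag p i.-1; rewrite prednK // in h2.
  apply/eqP; rewrite -(eqn_pmul2r (prime_gt0 pp)) -mulnA divnK //.
  by rewrite -h2 mulnC.
have hcop : coprimez p%:Z i%:Z.
  rewrite coprimezE /= prime_coprime //; apply/negP => /dvdn_leq; lia.
rewrite -(Gauss_dvdzl _ hcop).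
have -> : (ci + ('C(p, i) %/ p)%N%:Z) * i%:Z =
   (ci * i%:Z - (-1) ^+ i) + (('C(p.-1, i.-1))%:Z - (-1) ^+ i.-1)
   + ((-1) ^+ i + (-1) ^+ i.-1).
  rewrite -hb PoszM.
  have -> : (-1) ^+ i = - (-1) ^+ i.-1 :> int by rewrite -{1}(prednK i0) exprS mulN1r.
  ring.
have -> : (-1) ^+ i + (-1) ^+ i.-1 = 0 :> int.
  by rewrite -{1}(prednK i0) exprS mulN1r addNr.
rewrite addr0; apply: rpredD => //; apply: binm1 => //; lia.
Qed.

Lemma zfin (V : zmodType) (a b c e : V) : a - (b + e - c) + e = a + c - b.
Proof.
by rewrite opprB opprD !addrA subrK.
Qed.

Lemma adpowE (A : pzRingType) d e k (x y : cochain A) :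
  odd d -> adpow d e k x y = iter k (Adop x) y.
Proof.
move=> od; elim: k => [|k IH] //=; rewrite IH.
apply/funext => s; rewrite /gbracket /Adop fsubE signE oddM /= od /=.
by rewrite mul1r.
Qed.

Lemma coch_Adop (A : pzRingType) d e (X V : cochain A) :
  is_cochain d X -> odd d -> is_cochain e V -> (0 < e)%N ->
  is_cochain (e + d.-1) (Adop X V).
Proof.
move=> HX od HV e0; have d0 : (0 < d)%N by case: d od {HX}.
apply: coch_sub.
  by apply: coch_eq (coch_brace HX HV d0); lia.
by apply: coch_eq (coch_brace HV HX e0); lia.
Qed.

Lemma coch_iterAd (A : pzRingType) d (X U : cochain A) m :
  is_cochain d X -> odd d -> is_cochain d.+1 U ->
  is_cochain (d.+1 + m * d.-1) (iter m (Adop X) U).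
Proof.
move=> HX od HU; elim: m => [|m IH]; first by rewrite mul0n addn0.
rewrite iterS; apply: coch_eq (coch_Adop HX od IH _); lia.
Qed.

Unset Implicit Arguments.

Theorem proposition6p5 (A : pzRingType) (p d : nat) (c : nat -> int)
    (xt u : cochain A) :
  prime p -> (3 <= p)%N -> Zfree A ->
  odd d -> is_cochain d xt ->
  is_cochain d.+1 u -> (forall s, hdiff xt s = u s *+ p) ->
  (forall i : nat, (0 < i < p)%N -> ((p%:Z) %| c i * i%:Z - (-1) ^+ i)%Z) ->
  exists w z : cochain A,
    [/\ is_cochain (p * (d - 1)).+2 w,
        (forall s, hdiff (bpow xt p) s = w s *+ p),
        is_cochain (p * (d - 1)).+2 z &
        (forall s, zeta1 p c xt s - w s + adpow d d.+1 (p - 1) xt u s = z s *+ p)].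
Proof.
move=> pp p3 _ od HX HU hX hc.
have hXf : hdiff xt = u *+ p by apply/funext => s; rewrite fmulrnE hX.
have d0 : (0 < d)%N by case: d od {HX HU hX hXf}.
set q := p.-2.
have ep : p = q.+2 by rewrite /q; lia.
set cupj := fun j => cup (Pw xt j) (Pw xt (q - j)).
set Em := fun m => iter (p.-1 - m) (Rop xt) (iter m (Adop xt) u).
set W1 := \sum_(0 <= j < q.+1) cupj j *+ ('C(p, j.+1) %/ p).
have hdvd : forall j, (j < q.+1)%N -> ('C(p, j.+1) %/ p * p)%N = 'C(p, j.+1).
  move=> j hj; apply: divnK; apply: prime_dvd_bin => //; lia.
have coch_cupj : forall j, (j < q.+1)%N -> is_cochain (p * (d - 1)).+2 (cupj j).
  move=> j hj; apply: coch_eq (coch_cup (coch_Pw j HX od) (coch_Pw (q - j) HX od)).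
  rewrite ep; nia.
have coch_Em : forall m, (m < p)%N -> is_cochain (p * (d - 1)).+2 (Em m).
  move=> m hm; apply: coch_eq (coch_iterR (p.-1 - m) HX od (coch_iterAd m HX od HU) _) => //.
  nia.
exists (Vs xt u p - W1).
exists (\sum_(0 <= j < q.+1) cupj j *~ ((c j.+1 + ('C(p, j.+1) %/ p)%N%:Z) %/ p%:Z)%Z
        - \sum_(0 <= m < q.+1) Em m *+ ('C(p, m.+1) %/ p)).
split.
- apply: coch_sub.
    rewrite /Vs big_nat_cond; apply: coch_sum => m /andP [/andP [_ hm] _].
    exact/coch_mulrn/coch_Em.
  rewrite /W1 big_nat_cond; apply: coch_sum => j /andP [/andP [_ hj] _].
  exact/coch_mulrn/coch_cupj.
- move=> s; rewrite -fmulrnE; congr (_ s).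
  transitivity (hdiff (Pw xt p.-1)); first by [].
  rewrite (hdiff_Pw p.-1 HX od hXf) prednK ?prime_gt0 //.
  rewrite mulrnBl /W1 -sumrMnl; congr (_ - _).
  rewrite ep /= /Kp -ep -sumrMnl; apply: eq_big_nat => j hj.
  by rewrite -mulrnA hdvd.
- apply: coch_sub.
    rewrite big_nat_cond; apply: coch_sum => j /andP [/andP [_ hj] _].
    exact/coch_mulrz/coch_cupj.
  rewrite big_nat_cond; apply: coch_sum => m /andP [/andP [_ hm] _].
  apply/coch_mulrn/coch_Em; lia.
- move=> s.
  have hz : zeta1 p c xt = \sum_(0 <= j < q.+1) cupj j *~ c j.+1.
    apply/funext => t; rewrite /zeta1 fsumE {1}ep big_add1 /=.
    apply: eq_big_nat => j hj; rewrite fmulrzE; congr (_ *~ _).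
    rewrite /cupj /bpow {1}ep subSS subSn /=; last by lia.
    by [].
  have ha : adpow d d.+1 (p - 1) xt u = iter q.+1 (Adop xt) u.
    by rewrite adpowE // ep subn1.
  have hV : Vs xt u p = \sum_(0 <= m < q.+1) Em m *+ 'C(p, m.+1) + iter q.+1 (Adop xt) u.
    rewrite /Vs {1}ep big_nat_recr //=.
    have -> : (p.-1 - q.+1 = 0)%N by lia.
    by rewrite -ep binn mulr1n.
  rewrite hz ha hV -fsubE -faddE -fmulrnE; congr (_ s).
  rewrite mulrnBl -!sumrMnl.
  have e1 : \sum_(0 <= i < q.+1) Em i *+ ('C(p, i.+1) %/ p) *+ p =
            \sum_(0 <= m < q.+1) Em m *+ 'C(p, m.+1).
    by apply: eq_big_nat => j hj; rewrite -mulrnA hdvd.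
  have e2 : \sum_(0 <= i < q.+1) cupj i *~ ((c i.+1 + ('C(p, i.+1) %/ p)%N%:Z) %/ p%:Z)%Z *+ p =
            \sum_(0 <= j < q.+1) cupj j *~ c j.+1 + W1.
    rewrite /W1 -big_split; apply: eq_big_nat => j hj.
    rewrite pmulrn -mulrzA divzK; last by apply: cdiv => //; [|apply: hc]; lia.
    by rewrite mulrzDr pmulrn.
  rewrite e1 e2.
  exact: zfin.
Qed.
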